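(* Let $\mathcal{S}$ be a finite set of road segments and $y_1,\dots,y_N$ (collectively $y_{[N]}$) the routes of $N$ historical trips, each a nonempty set of distinct segments. For each $n$ and $s\in y_n$ one observes $T'_{n,s}=\theta_s+\varepsilon_{n,s}$, where the $\theta_s$ are i.i.d. with mean $\mu$ and variance $\tau^2>0$, independent of the errors; for each $n$ the errors $(\varepsilon_{n,s})_{s\in y_n}$ have mean $0$ and covariances $\sigma_{s,t}$; errors from different trips are independent. Suppose $\sigma_{s,t}\ge0$ for all $s,t\in\mathcal{S}$. Fix a route $y$ and a neighborhood $\delta(y)$ (a set of historical routes) such that $$N_{s\cup t}N^{\delta(y)}_sN^{\delta(y)}_t\le N^{\delta(y)}_{s\cup t}N_sN_t\quad\text{for all } s,t\in y.$$ Let $\hat\Theta^{\ast(\mathrm{seg})}_y$ be the optimal segment-based estimator and $\hat\Theta^{\ast(\mathrm{route})}_y$ the optimal route-based estimator with neighborhood $\delta(y)$. Then for any set of historical routes, $$R\big(\hat\Theta^{\ast(\mathrm{seg})}_y\mid y_{[N]}\big)\le R\big(\hat\Theta^{\ast(\mathrm{route})}_y\mid y_{[N]}\big).$$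
   Context: $N_s=|\{n:s\in y_n\}|$, $N_{s\cup t}=|\{n:s,t\in y_n\}|$, $N^{\delta(y)}_s=|\{n:y_n\in\delta(y),s\in y_n\}|$, $N^{\delta(y)}_{s\cup t}=|\{n:y_n\in\delta(y),s,t\in y_n\}|$, $M_{\delta(y)}=\sum_n\mathbf 1\{y_n\in\delta(y)\}$; convention $0/0=0$. The integrated risk is $R(\hat\Theta_y\mid y_{[N]})=\mathbb{E}[(\hat\Theta_y-\sum_{s\in y}\theta_s)^2\mid y_{[N]}]$, expectation over errors and prior of $\theta$, conditional on the historical routes. A segment-based estimator has the form $\sum_{s\in y}[(1-\phi_s(N_s))\mu+\phi_s(N_s)\sum_{n:s\in y_n}T'_{n,s}/N_s]$ with $\phi_s:\mathbb{Z}_{\ge0}\to\mathbb{R}$, $\phi_s(0)=0$; the optimal one chooses the weights to minimize the integrated risk. A route-based estimator with neighborhood $\delta(y)$ has the form $(1-\phi_{\delta(y)}(M_{\delta(y)}))|y|\mu+\phi_{\delta(y)}(M_{\delta(y)})\sum_{n:y_n\in\delta(y)}\sum_{s\in y_n}T'_{n,s}/M_{\delta(y)}$ with $\phi_{\delta(y)}(0)=0$; the optimal one chooses the weight to minimize the integrated risk. *)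

(* Defs.v *)
From HB Require Import structures.
From mathcomp Require Import all_boot all_order all_algebra.
From mathcomp Require Import all_classical all_reals all_analysis.
From mathcomp Require Import finmap.

Set Implicit Arguments.
Unset Strict Implicit.
Unset Printing Implicit Defensive.

Import Order.TTheory GRing.Theory Num.Theory.

Local Open Scope classical_set_scope.
Local Open Scope ring_scope.

Section Defs.
Context {d : measure_display} {T : measurableType d} {R : realType}.

Definition gen_sigma {I : Type} (K : set I) (X : I -> T -> R) : set (set T) :=
  <<s \bigcup_(k in K) preimage_set_system setT (X k) measurable >>.

Definition mutually_independent (P : probability T R) {I : choiceType}
    (G : I -> set (set T)) : Prop :=
  forall (J : {fset I}) (A : I -> set T),
    (forall i, i \in J -> G i (A i)) ->
    P (\bigcap_(i in [set` J]) A i) = (\prod_(i <- J) P (A i))%E.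

Definition independent2 (P : probability T R) (G1 G2 : set (set T)) : Prop :=
  mutually_independent P (fun b : bool => if b then G1 else G2).

Definition same_distribution (P : probability T R) (X Y : T -> R) : Prop :=
  forall B : set R, measurable B -> P (X @^-1` B) = P (Y @^-1` B).

End Defs.

Section Model.
Context {T : Type} {R : realType} {S : finType} {N : nat}.

Definition Ncnt (yr : 'I_N -> {set S}) (s : S) : nat :=
  #|[set n : 'I_N | s \in yr n]|.
Definition Ncnt2 (yr : 'I_N -> {set S}) (s t : S) : nat :=
  #|[set n : 'I_N | (s \in yr n) && (t \in yr n)]|.
Definition Ndcnt (yr : 'I_N -> {set S}) (dl : {set {set S}}) (s : S) : nat :=
  #|[set n : 'I_N | (yr n \in dl) && (s \in yr n)]|.
Definition Ndcnt2 (yr : 'I_N -> {set S}) (dl : {set {set S}}) (s t : S) : nat :=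
  #|[set n : 'I_N | [&& yr n \in dl, s \in yr n & t \in yr n]]|.
Definition Mcnt (yr : 'I_N -> {set S}) (dl : {set {set S}}) : nat :=
  #|[set n : 'I_N | yr n \in dl]|.

Definition Tobs (theta : S -> T -> R) (eps : 'I_N -> S -> T -> R)
    (n : 'I_N) (s : S) : T -> R := fun w => theta s w + eps n s w.

(* segment-based estimator with weights phi_s; division by 0 yields 0
   in MathComp, matching the convention 0/0 = 0 *)
Definition seg_est (yr : 'I_N -> {set S}) (theta : S -> T -> R)
    (eps : 'I_N -> S -> T -> R) (mu : R) (y : {set S})
    (phi : S -> nat -> R) : T -> R := fun w =>
  \sum_(s in y)
     ((1 - phi s (Ncnt yr s)) * mu
      + phi s (Ncnt yr s) *
        ((\sum_(n : 'I_N | s \in yr n) Tobs theta eps n s w) / (Ncnt yr s)%:R)).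

Definition route_est (yr : 'I_N -> {set S}) (theta : S -> T -> R)
    (eps : 'I_N -> S -> T -> R) (mu : R) (y : {set S}) (dl : {set {set S}})
    (phi : nat -> R) : T -> R := fun w =>
  (1 - phi (Mcnt yr dl)) * (#|y|%:R * mu)
  + phi (Mcnt yr dl) *
    ((\sum_(n : 'I_N | yr n \in dl) \sum_(s in yr n) Tobs theta eps n s w)
       / (Mcnt yr dl)%:R).

End Model.

Definition risk {d : measure_display} {T : measurableType d} {R : realType}
    {S : finType} (P : probability T R) (theta : S -> T -> R) (y : {set S})
    (est : T -> R) : \bar R :=
  'E_P[fun w => (est w - \sum_(s in y) theta s w) ^+ 2].

(* Main.v *)
Require Import Defs.
From HB Require Import structures.
From mathcomp Require Import all_boot all_order all_algebra.
From mathcomp Require Import all_classical all_reals all_analysis.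
From mathcomp Require Import finmap.
From mathcomp Require Import measurable_realfun.
From mathcomp Require Import ring zify.

Import Order.TTheory GRing.Theory Num.Theory.
Local Open Scope ring_scope.

Lemma al_arith (R : realFieldType) (p q r u v z M : nat) (a sg : R) : 0 <= sg ->
  (r * p * q <= z * u * v)%N ->
  (a * p%:R / M%:R / u%:R) * (a * q%:R / M%:R / v%:R) * sg * (r%:R * 1)
  <= 1 * 1 * sg * (z%:R * (a / M%:R) ^+ 2).
Proof.
move=> sg0 cond.
have -> : (a * p%:R / M%:R / u%:R) * (a * q%:R / M%:R / v%:R) * sg * (r%:R * 1)
   = sg * (a / M%:R) ^+ 2 * ((p * q * r)%:R * (u%:R^-1 * v%:R^-1)).
  rewrite !natrM; ring.
have -> : 1 * 1 * sg * (z%:R * (a / M%:R) ^+ 2) = sg * (a / M%:R) ^+ 2 * z%:R by ring.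
apply: ler_wpM2l; first by apply: mulr_ge0 => //; exact: sqr_ge0.
have [->|u0] := eqVneq u 0%N; first by rewrite invr0 mul0r mulr0 ler0n.
have [->|v0] := eqVneq v 0%N; first by rewrite invr0 mulr0 mulr0 ler0n.
rewrite -invfM -natrM ler_pdivrMr ?ltr0n ?muln_gt0 ?lt0n ?u0 ?v0 //.
rewrite -natrM ler_nat.
by move: cond; nia.
Qed.

Section Alg.
Context {R : realFieldType} {S : finType} {N : nat} (yr : 'I_N -> {set S}).

Lemma al_PB (F : 'I_N * S -> R) :
  \sum_(k | k.2 \in yr k.1) F k = \sum_n \sum_(s in yr n) F (n, s).
Proof. by rewrite pair_big_dep; apply: eq_big => [[n s]|[n s] _]. Qed.

Lemma al_card_sum (I : finType) (Q : pred I) (x : R) :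
  \sum_(n | Q n) x = (#|[set n | Q n]|)%:R * x.
Proof. by rewrite cardsE sumr_const mulr_natl. Qed.

Lemma al_sum_if (I : finType) (Q : pred I) (a b : I -> R) :
  \sum_i (if Q i then a i else 0) * b i = \sum_(i | Q i) a i * b i.
Proof. by rewrite [RHS]big_mkcond; apply: eq_bigr => i _; case: (Q i); rewrite ?mul0r. Qed.


Lemma al_inner_red (n : 'I_N) (F G : 'I_N * S -> R) :
  \sum_(l | l.2 \in yr l.1) F l * (if n == l.1 then G l else 0) =
  \sum_(t in yr n) F (n, t) * G (n, t).
Proof.
rewrite al_PB (bigD1 n) //= eqxx [X in _ + X]big1 ?addr0 //.
by move=> m mn; apply: big1 => t _; rewrite eq_sym (negbTE mn) mulr0.
Qed.

Lemma al_NR (u : 'I_N -> R) (v : S -> R) (sg : S -> S -> R) :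
  \sum_(k | k.2 \in yr k.1) \sum_(l | l.2 \in yr l.1)
     (u k.1 * v k.2) * (u l.1 * v l.2) * (if k.1 == l.1 then sg k.2 l.2 else 0)
  = \sum_s \sum_t v s * v t * sg s t * \sum_(n | (s \in yr n) && (t \in yr n)) u n ^+ 2.
Proof.
under eq_bigr => k _ do rewrite (al_inner_red k.1 (fun l => (u k.1 * v k.2) * (u l.1 * v l.2)) (fun l => sg k.2 l.2)) /=.
rewrite al_PB /=.
transitivity (\sum_n \sum_s \sum_t (if (s \in yr n) && (t \in yr n)
   then u n ^+ 2 * (v s * v t * sg s t) else 0)).
  apply: eq_bigr => n _; rewrite big_mkcond; apply: eq_bigr => s _.
  case: (s \in yr n) => /=; last by rewrite big1.
  rewrite big_mkcond; apply: eq_bigr => t _; case: (t \in yr n) => //=; ring.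
rewrite exchange_big; apply: eq_bigr => s _; rewrite exchange_big.
apply: eq_bigr => t _; rewrite mulr_sumr [RHS]big_mkcond; apply: eq_bigr => n _.
by case: ifP => _ //; rewrite mulrC.
Qed.


Lemma al_count_route (dl : {set {set S}}) (F : S -> R) :
  \sum_(n | yr n \in dl) \sum_(s in yr n) F s =
  \sum_s (#|[set n | (yr n \in dl) && (s \in yr n)]|)%:R * F s.
Proof.
transitivity (\sum_n \sum_s (if (yr n \in dl) && (s \in yr n) then F s else 0)).
  rewrite big_mkcond; apply: eq_bigr => n _.
  case: (yr n \in dl) => /=; last by rewrite big1.
  by rewrite big_mkcond.
rewrite exchange_big; apply: eq_bigr => s _.
by rewrite -big_mkcond al_card_sum.
Qed.

Lemma al_eps_route (Q : pred 'I_N) (a : R) (G : 'I_N * S -> R) :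
  \sum_(k | k.2 \in yr k.1) (if Q k.1 then a else 0) * G k =
  a * \sum_(n | Q n) \sum_(s in yr n) G (n, s).
Proof.
rewrite al_PB mulr_sumr [RHS]big_mkcond; apply: eq_bigr => n _.
case: (Q n) => /=; last by rewrite big1 // => s _; rewrite mul0r.
by rewrite mulr_sumr.
Qed.

Lemma al_eps_seg (y : {set S}) (a : S -> R) (G : 'I_N * S -> R) :
  \sum_(k | k.2 \in yr k.1) (if k.2 \in y then a k.2 else 0) * G k =
  \sum_(s in y) \sum_(n | s \in yr n) a s * G (n, s).
Proof.
rewrite al_PB.
transitivity (\sum_n \sum_s (if (s \in y) && (s \in yr n) then a s * G (n, s) else 0)).
  apply: eq_bigr => n _; rewrite big_mkcond; apply: eq_bigr => s _.
  by case: (s \in yr n); case: (s \in y); rewrite /= ?mul0r.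
rewrite exchange_big [RHS]big_mkcond; apply: eq_bigr => s _.
case: (s \in y) => /=; last by rewrite big1.
by rewrite [RHS]big_mkcond.
Qed.


Lemma al_NR' (be : 'I_N * S -> R) (u : 'I_N -> R) (v : S -> R) (sg : S -> S -> R) :
  (forall k, be k = u k.1 * v k.2) ->
  \sum_(k | k.2 \in yr k.1) \sum_(l | l.2 \in yr l.1)
     be k * be l * (if k.1 == l.1 then sg k.2 l.2 else 0)
  = \sum_s \sum_t v s * v t * sg s t * \sum_(n | (s \in yr n) && (t \in yr n)) u n ^+ 2.
Proof.
move=> H; rewrite -al_NR; apply: eq_bigr => k _; apply: eq_bigr => l _.
by rewrite !H.
Qed.

End Alg.

Local Open Scope classical_set_scope.
Local Open Scope ring_scope.

Section Indep.
Context {d : measure_display} {T : measurableType d} {R : realType}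
  (P : probability T R).

Definition mkmf {d'} {T' : measurableType d'} {f : T -> T'} (mf : measurable_fun setT f)
  : {mfun T >-> T'} :=
  MeasurableFun.Pack (MeasurableFun.Class (isMeasurableFun.Build _ _ _ _ _ mf)).

Local Open Scope ereal_scope.

Lemma indep_expectationM (X Y : T -> R) :
  X \in Lfun P 1 -> Y \in Lfun P 1 -> (X \* Y)%R \in Lfun P 1 ->
  (forall A B, measurable A -> measurable B ->
     P (X @^-1` A `&` Y @^-1` B) = P (X @^-1` A) * P (Y @^-1` B)) ->
  'E_P[X \* Y] = 'E_P[X] * 'E_P[Y].
Proof.
move=> l1X l1Y l1XY ind.
have iX := l1X; have iY := l1Y; have iXY := l1XY.
move/Lfun1_integrable: iX => iX.
move/Lfun1_integrable: iY => iY.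
move/Lfun1_integrable: iXY => iXY.
have mX : measurable_fun setT X.
  by move/integrableP: iX => [/measurable_EFinP].
have mY : measurable_fun setT Y.
  by move/integrableP: iY => [/measurable_EFinP].
have mZ : measurable_fun setT (fun w => (X w, Y w)) by exact: measurable_fun_pair.
pose Xm := mkmf mX; pose Ym := mkmf mY; pose Zm := mkmf mZ.
pose muX := distribution P Xm; pose muY := distribution P Ym.
pose muZ := distribution P Zm.
pose f := fun p : R * R => (p.1 * p.2)%:E.
have mf : measurable_fun setT f.
  apply/measurable_EFinP; apply: measurable_funM => //.
have eqm : forall A, measurable A -> (muX \x muY) A = muZ A.
  apply: product_measure_unique => A B mA mB.
  rewrite /muZ /muX /muY /distribution /pushforward /= -ind //.
have EE : forall (W : {mfun T >-> R}), (W : T -> R) \in Lfun P 1 ->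
    'E_P[W] = \int[distribution P W]_x x%:E.
  move=> W l1W; rewrite unlock /distribution integral_pushforward ?preimage_setT //.
  exact/Lfun1_integrable.
have intW : forall (W : {mfun T >-> R}), (W : T -> R) \in Lfun P 1 ->
    (distribution P W).-integrable setT (fun x => x%:E).
  move=> W l1W; apply: integrable_pushforward => //.
    exact: EFin_measurable.
  by rewrite preimage_setT; apply/Lfun1_integrable.
have E1 : 'E_P[X \* Y] = \int[muZ]_p f p.
  by rewrite unlock /muZ /distribution integral_pushforward ?preimage_setT //.
have intZ : muZ.-integrable setT f.
  by apply: integrable_pushforward => //; rewrite preimage_setT.
have intP : (muX \x muY).-integrable setT f.
  apply/integrableP; split => //.
  have -> : \int[muX \x muY]_x `|f x| = \int[muZ]_x `|f x|.
    by apply: eq_measure_integral => A mA _; exact: eqm.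
  by move/integrableP: intZ => [].
rewrite E1 (eq_measure_integral (muX \x muY)); last first.
  by move=> A mA _; exact: (esym (eqm A mA)).
rewrite -(integral12_prod_meas1 intP) /fubini_F /f /=.
have EX : 'E_P[X] = \int[muX]_x x%:E by exact: (EE Xm).
have EY : 'E_P[Y] = \int[muY]_x x%:E by exact: (EE Ym).
have fY : 'E_P[Y] \is a fin_num by exact: expectation_fin_num.
transitivity (\int[muX]_x (x%:E * (fine 'E_P[Y])%:E)).
  apply: eq_integral => x _.
  under eq_integral do rewrite EFinM.
  by rewrite integralZl //= ?(intW Ym) // -EY fineK.
by rewrite integralZr //= ?(intW Xm) // -EX fineK.
Qed.

Lemma L2_L1 (X : T -> R) : X \in Lfun P 2%:E -> X \in Lfun P 1.
Proof. apply: Lfun_subset12.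
by rewrite fin_num_measure. Qed.

Lemma indep_E (G1 G2 : set (set T)) (X Y : T -> R) :
  (forall A B, G1 A -> G2 B -> P (A `&` B) = P A * P B) ->
  (forall B, measurable B -> G1 (X @^-1` B)) ->
  (forall B, measurable B -> G2 (Y @^-1` B)) ->
  X \in Lfun P 2%:E -> Y \in Lfun P 2%:E ->
  'E_P[X \* Y] = 'E_P[X] * 'E_P[Y].
Proof.
move=> ind g1 g2 l2X l2Y; apply: indep_expectationM.
- exact: L2_L1.
- exact: L2_L1.
- exact: Lfun2_mul_Lfun1.
- by move=> A B mA mB; apply: ind; [apply: g1|apply: g2].
Qed.

Lemma mi_pair (I : choiceType) (G : I -> set (set T)) i j : i != j ->
  mutually_independent P G ->
  forall A B, G i A -> G j B -> P (A `&` B) = P A * P B.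
Proof.
move=> ij mi A B GA GB.
have := mi [fset i; j]%fset (fun k => if k == i then A else B).
have ji : (j == i) = false by apply/negbTE; rewrite eq_sym.
rewrite big_fsetU1 /=; last by rewrite !inE.
rewrite big_seq_fset1 eqxx ji.
move=> <-.
- congr (P _); apply/seteqP; split => x /=.
    by move=> [Ax Bx] k /=; rewrite !inE => /orP[] /eqP ->; rewrite ?eqxx ?ji.
  move=> H; split.
    by have := H i; rewrite /= !inE eqxx /=; apply.
  by have := H j; rewrite /= !inE eqxx orbT ji; apply.
- by move=> k; rewrite !inE => /orP[] /eqP ->; rewrite ?eqxx ?ji.
Qed.



Lemma gen_sigma_pre {I : Type} (K : set I) (X : I -> T -> R) k (f : R -> R) :
  K k -> measurable_fun setT f -> forall B, measurable B ->
  gen_sigma K X ((fun w => f (X k w)) @^-1` B).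
Proof.
move=> Kk mf B mB; apply: sub_sigma_algebra; exists k => //.
exists (f @^-1` B); last by rewrite setTI.
by rewrite -[X in measurable X]setTI; apply: mf.
Qed.



Lemma lin_Lfun (r : \bar R) (I : finType) (p : pred I) (a : I -> R) (F : I -> T -> R) :
  (1 <= r)%E ->
  (forall i, p i -> F i \in Lfun P r) ->
  (fun w => \sum_(i | p i) a i * F i w)%R \in Lfun P r.
Proof.
move=> r1 H.
have -> : (fun w => \sum_(i | p i) a i * F i w)%R = (\sum_(i | p i) (a i *: F i))%R.
  by rewrite fct_sumE.
by apply: rpred_sum => i pi; apply: rpredZ; exact: H.
Qed.

Lemma lin_E (I : finType) (p : pred I) (a : I -> R) (F : I -> T -> R) :
  (forall i, p i -> F i \in Lfun P 1) ->
  'E_P[fun w => \sum_(i | p i) a i * F i w]%R =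
  (\sum_(i | p i) a i * fine 'E_P[F i])%:E.
Proof.
move=> H.
have -> : (fun w => \sum_(i | p i) a i * F i w)%R = (\sum_(i | p i) (a i *: F i))%R.
  by rewrite fct_sumE.
suff : ((\sum_(i | p i) (a i *: F i)) \in Lfun P 1 /\
  'E_P[\sum_(i | p i) (a i *: F i)] = (\sum_(i | p i) a i * fine 'E_P[F i])%:E)%R.
  by case.
elim/big_rec2: _ => [|i x g pi [gL Eg]].
  by split; [exact: rpred0|rewrite -[0%R]/(cst 0%R : T -> R) expectation_cst].
split; first by apply: rpredD => //; apply: rpredZ; exact: H.
rewrite expectationD //; last by apply: rpredZ; exact: H.
rewrite Eg.
have -> : (a i *: F i = a i \o* F i)%R.
  by apply/funext => w /=; rewrite mulrC.
rewrite expectationZl; last exact: H.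
by rewrite -(fineK (expectation_fin_num (H i pi))) -EFinM -EFinD.
Qed.


Lemma bil_E (I J : finType) (p : pred I) (q : pred J) (a : I -> R) (c : J -> R)
  (F : I -> T -> R) (G : J -> T -> R) :
  (forall i, p i -> F i \in Lfun P 2%:E) ->
  (forall j, q j -> G j \in Lfun P 2%:E) ->
  'E_P[fun w => (\sum_(i | p i) a i * F i w) * (\sum_(j | q j) c j * G j w)]%R =
  (\sum_(i | p i) \sum_(j | q j) a i * c j * fine 'E_P[F i \* G j])%:E.
Proof.
move=> HF HG.
have -> : (fun w => (\sum_(i | p i) a i * F i w) * (\sum_(j | q j) c j * G j w))%R =
  (fun w => \sum_(k | p k.1 && q k.2) (a k.1 * c k.2) * (F k.1 \* G k.2) w)%R.
  apply/funext => w; rewrite big_distrlr /= pair_big_dep /=.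
  by apply: eq_bigr => k _; rewrite mulrACA.
rewrite lin_E; last first.
  by move=> k /andP[pk qk]; apply: Lfun2_mul_Lfun1; [exact: HF|exact: HG].
by rewrite pair_big_dep.
Qed.

End Indep.
Lemma card_cl (I : finType) (Q : pred I) : #|[set n | Q n]%SET| = #|[set n | Q n]|.
Proof.
apply: eq_card => n; rewrite finset.inE; apply/idP/idP => H.
  by apply/mem_set.
by move/set_mem: H.
Qed.

Section Main.
Context {d : measure_display} {T : measurableType d} {R : realType}
  (P : probability T R) {S : finType} {N : nat} (yr : 'I_N -> {set S})
  (theta : S -> T -> R) (eps : 'I_N -> S -> T -> R)
  (mu tau2 : R) (sigma : S -> S -> R).
Context (th2 : forall s, theta s \in Lfun P 2%:E)
  (thE : forall s, ('E_P[theta s] = mu%:E)%E)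
  (thV : forall s, ('V_P[theta s] = tau2%:E)%E)
  (thI : mutually_independent P (fun s : S => gen_sigma [set s] theta))
  (ep2 : forall n s, s \in yr n -> eps n s \in Lfun P 2%:E)
  (epE : forall n s, s \in yr n -> ('E_P[eps n s] = 0)%E)
  (epC : forall n s t, s \in yr n -> t \in yr n ->
     covariance P (eps n s) (eps n t) = (sigma s t)%:E)
  (epI : mutually_independent P
    (fun n : 'I_N => gen_sigma [set s | s \in yr n] (eps n)))
  (thep : independent2 P (gen_sigma setT theta)
    (gen_sigma [set ns : 'I_N * S | ns.2 \in yr ns.1]
               (fun ns => eps ns.1 ns.2))).

Definition vt s := fun w => theta s w - mu.

Lemma vt2 s : vt s \in Lfun P 2%:E.
Proof.
have -> : vt s = theta s - cst mu by [].
apply: rpredB; first by rewrite lee_fin ler1n.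
- by move=> ?; exact: th2.
- by move=> ?; exact: Lfun_cst.
Qed.

Lemma mvt s : ('E_P[vt s] = 0)%E.
Proof.
have -> : vt s = theta s \- cst mu by [].
rewrite expectationB ?thE ?expectation_cst ?subee //; try exact: L2_L1.
exact: Lfun_cst.
Qed.

Lemma mvv s t : ('E_P[vt s \* vt t] = (if s == t then tau2 else 0)%:E)%E.
Proof.
case: eqP => [<-|st].
  rewrite -(thV s) /variance covariance.unlock thE /=.
  by congr expectation.
rewrite (indep_E P (gen_sigma [set s] theta) (gen_sigma [set t] theta)).
- by rewrite !mvt mule0.
- by apply: (mi_pair P _ (fun s : S => gen_sigma [set s] theta)) => //; apply/eqP.
- move=> B mB; rewrite /vt; apply: (gen_sigma_pre [set s] theta s (fun x => x - mu)) => //.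
  exact: measurable_funB.
- move=> B mB; rewrite /vt; apply: (gen_sigma_pre [set t] theta t (fun x => x - mu)) => //.
  exact: measurable_funB.
- exact: vt2.
- exact: vt2.
Qed.

Lemma mve s n t : t \in yr n -> ('E_P[vt s \* eps n t] = 0)%E.
Proof.
move=> tn.
rewrite (indep_E P (gen_sigma setT theta)
  (gen_sigma [set ns : 'I_N * S | ns.2 \in yr ns.1] (fun ns => eps ns.1 ns.2))).
- by rewrite mvt mul0e.
- by apply: (mi_pair P _ _ true false isT thep).
- move=> B mB; rewrite /vt; apply: (gen_sigma_pre setT theta s (fun x => x - mu)) => //.
  exact: measurable_funB.
- move=> B mB; apply: (gen_sigma_pre [set ns : 'I_N * S | ns.2 \in yr ns.1] (fun ns => eps ns.1 ns.2) (n, t) (fun x => x)) => //.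
- exact: vt2.
- exact: ep2.
Qed.

Lemma mee n s m t : s \in yr n -> t \in yr m ->
  ('E_P[eps n s \* eps m t] = (if n == m then sigma s t else 0)%:E)%E.
Proof.
move=> sn tm; case: eqP => [nm|nm].
  subst m; rewrite -(epC _ _ _ sn tm) covariance.unlock !epE //=.
  by congr expectation; apply/funext => w; rewrite mulrfctE /= !subr0.
rewrite (indep_E P (gen_sigma [set s | s \in yr n] (eps n))
  (gen_sigma [set s | s \in yr m] (eps m))).
- by rewrite epE // mul0e.
- by apply: (mi_pair P _ (fun n : 'I_N => gen_sigma [set s | s \in yr n] (eps n))) => //; apply/eqP.
- by move=> B mB; apply: (gen_sigma_pre [set s | s \in yr n] (eps n) s (fun x => x)).
- by move=> B mB; apply: (gen_sigma_pre [set s | s \in yr m] (eps m) t (fun x => x)).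
- exact: ep2.
- exact: ep2.
Qed.


Definition eidx := (S + ('I_N * S))%type.
Definition wp (i : eidx) : bool :=
  match i with inl _ => true | inr k => k.2 \in yr k.1 end.
Definition Fn (i : eidx) : T -> R :=
  match i with inl s => vt s | inr k => eps k.1 k.2 end.
Definition co (al : S -> R) (be : 'I_N * S -> R) (i : eidx) : R :=
  match i with inl s => al s | inr k => be k end.
Definition Km (i j : eidx) : R :=
  match i, j with
  | inl s, inl t => if s == t then tau2 else 0
  | inr k, inr l => if k.1 == l.1 then sigma k.2 l.2 else 0
  | _, _ => 0 end.

Lemma Fn2 i : wp i -> Fn i \in Lfun P 2%:E.
Proof. by case: i => [s|[n s]] /= H; [exact: vt2|exact: ep2]. Qed.

Lemma FnE i : wp i -> ('E_P[Fn i] = 0)%E.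
Proof. by case: i => [s|[n s]] /= H; [exact: mvt|exact: epE]. Qed.

Lemma FnFn i j : wp i -> wp j -> fine 'E_P[Fn i \* Fn j] = Km i j.
Proof.
case: i => [s|[n s]]; case: j => [t|[m t]] /= Hi Hj.
- by rewrite mvv.
- by rewrite mve.
- have -> : (eps n s \* vt t) = (vt t \* eps n s) by apply/funext => w /=; rewrite mulrC.
  by rewrite mve.
- by rewrite mee.
Qed.


Lemma ML (b : R) (al : S -> R) (be : 'I_N * S -> R) :
  ('E_P[fun w => (b + \sum_s al s * vt s w
      + \sum_(k | k.2 \in yr k.1) be k * eps k.1 k.2 w) ^+ 2]%R =
  (b ^+ 2 + tau2 * \sum_s al s ^+ 2
   + \sum_(k | k.2 \in yr k.1) \sum_(l | l.2 \in yr l.1)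
       be k * be l * (if k.1 == l.1 then sigma k.2 l.2 else 0))%:E)%E.
Proof.
pose W := fun w => \sum_(i | wp i) co al be i * Fn i w.
have eW : forall w, \sum_s al s * vt s w
      + \sum_(k | k.2 \in yr k.1) be k * eps k.1 k.2 w = W w.
  by move=> w; rewrite /W big_sumType.
have WL2 : W \in Lfun P 2%:E.
  by apply: lin_Lfun => //; [rewrite lee_fin ler1n|exact: Fn2].
have EW : ('E_P[W] = 0)%E.
  rewrite /W lin_E; last by move=> i wi; apply: L2_L1; exact: Fn2.
  by rewrite big1 // => i wi; rewrite FnE // mulr0.
have EWW : ('E_P[W \* W] = (\sum_(i | wp i) \sum_(j | wp j)
    co al be i * co al be j * Km i j)%:E)%E.
  rewrite (_ : W \* W = (fun w => W w * W w)) // /W bil_E; try exact: Fn2.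
  congr (_%:E); apply: eq_bigr => i wi; apply: eq_bigr => j wj.
  by rewrite FnFn.
have -> : (fun w => (b + \sum_s al s * vt s w
      + \sum_(k | k.2 \in yr k.1) be k * eps k.1 k.2 w) ^+ 2) =
    cst (b ^+ 2) \+ ((2 * b) \o* W \+ W \* W).
  apply/funext => w /=; rewrite -addrA eW; ring.
have W1 : W \in Lfun P 1 by exact: L2_L1.
have WW1 : W \* W \in Lfun P 1 by exact: Lfun2_mul_Lfun1.
rewrite expectationD; last 2 first.
  - exact: Lfun_cst.
  - by apply: rpredD => //; apply: Lfun_scale.
rewrite expectationD //; last by apply: Lfun_scale.
rewrite expectationZl // EW EWW expectation_cst mule0 add0e -EFinD.
congr (_%:E); rewrite -addrA; congr (_ + _).
rewrite big_sumType /=.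
under eq_bigr do rewrite big_sumType /=.
under [X in _ + X]eq_bigr do rewrite big_sumType /=.
congr (_ + _).
  rewrite mulr_sumr; apply: eq_bigr => s _.
  rewrite [X in _ + X]big1 ?addr0; last by move=> k _; rewrite mulr0.
  rewrite (bigD1 s) //= eqxx big1 ?addr0; first by rewrite mulrC expr2.
  by move=> t ts; rewrite eq_sym (negbTE ts) mulr0.
apply: eq_bigr => k _.
by rewrite big1 ?add0r // => t _; rewrite mulr0.
Qed.


Lemma seg_form (y : {set S}) (psi : S -> nat -> R) (w : T) :
  (forall s, psi s 0%N = 0) ->
  seg_est yr theta eps mu y psi w - \sum_(s in y) theta s w =
  0 + \sum_s (if s \in y then psi s (Ncnt yr s) - 1 else 0) * vt s w
    + \sum_(k | k.2 \in yr k.1) (if k.2 \in y then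
         psi k.2 (Ncnt yr k.2) / (Ncnt yr k.2)%:R else 0) * eps k.1 k.2 w.
Proof.
move=> psi0.
rewrite add0r al_sum_if (al_eps_seg yr y (fun s => psi s (Ncnt yr s) / (Ncnt yr s)%:R) (fun k => eps k.1 k.2 w)) /=.
rewrite /seg_est -sumrB -big_split /=.
apply: eq_bigr => s sy.
rewrite /Tobs big_split /=.
rewrite al_card_sum -/(Ncnt yr s) -mulr_sumr /vt.
set Ns := Ncnt yr s; set E := \sum_(n | s \in yr n) eps n s w.
have [N0|N0] := eqVneq Ns 0%N.
  rewrite N0 psi0; ring.
have cN : #|[set n | s \in yr n]%SET| = Ns.
  by rewrite card_cl.
rewrite cN.
have -> : (Ns%:R * theta s w + E) / Ns%:R = theta s w + E / Ns%:R.
  by rewrite mulrDl [Ns%:R * _]mulrC mulfK // pnatr_eq0.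
ring.
Qed.


Definition brt (y : {set S}) (dl : {set {set S}}) (phi : R) (M : nat) :=
  (1 - phi) * (#|y|%:R * mu) + phi / M%:R * (\sum_s (Ndcnt yr dl s)%:R * mu)
  - #|y|%:R * mu.

Lemma route_form (y : {set S}) (dl : {set {set S}}) (phiR : nat -> R) (w : T) :
  route_est yr theta eps mu y dl phiR w - \sum_(s in y) theta s w =
  brt y dl (phiR (Mcnt yr dl)) (Mcnt yr dl)
  + \sum_s (phiR (Mcnt yr dl) * (Ndcnt yr dl s)%:R / (Mcnt yr dl)%:R - (s \in y)%:R) * vt s w
  + \sum_(k | k.2 \in yr k.1) (if yr k.1 \in dl then phiR (Mcnt yr dl) / (Mcnt yr dl)%:R else 0)
      * eps k.1 k.2 w.
Proof.
set M := Mcnt yr dl; set phi := phiR M.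
rewrite (al_eps_route yr (fun n => yr n \in dl) (phi / M%:R) (fun k => eps k.1 k.2 w)) /=.
rewrite /route_est /Tobs -/M -/phi.
rewrite (eq_bigr (fun n => \sum_(s in yr n) theta s w + \sum_(s in yr n) eps n s w)); last by move=> n _; rewrite big_split.
rewrite big_split /= (al_count_route yr dl (fun s => theta s w)).
have nd : forall s, #|[set n | (yr n \in dl) && (s \in yr n)]%SET| = Ndcnt yr dl s.
  by move=> s; rewrite card_cl.
rewrite (eq_bigr (fun s => (Ndcnt yr dl s)%:R * theta s w)); last by move=> s _; rewrite card_cl.
have mid : \sum_s (phi * (Ndcnt yr dl s)%:R / M%:R - (s \in y)%:R) * vt s w =
   phi / M%:R * \sum_s (Ndcnt yr dl s)%:R * theta s w
   - phi / M%:R * \sum_s (Ndcnt yr dl s)%:R * mu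
   - \sum_(s in y) theta s w + #|y|%:R * mu.
  transitivity (\sum_s (phi / M%:R * ((Ndcnt yr dl s)%:R * theta s w)
     - phi / M%:R * ((Ndcnt yr dl s)%:R * mu)
     - (s \in y)%:R * theta s w + (s \in y)%:R * mu)).
    by apply: eq_bigr => s _; rewrite /vt; ring.
  rewrite !big_split /=.
  rewrite !sumrN -!mulr_sumr.
  congr (_ - _ - _ + _).
  - by rewrite [RHS]big_mkcond; apply: eq_bigr => s _; case: (s \in y); rewrite ?mul1r ?mul0r.
  - rewrite -mulr_suml; congr (_ * _).
    rewrite -sumr_const [RHS]big_mkcond; apply: eq_bigr => s _.
    by case: (s \in y).
rewrite mid /brt; ring.
Qed.


Lemma card_cl2 (I : finType) (Q1 Q2 : pred I) : (forall n, Q1 n = Q2 n) ->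
  #|[set n | Q1 n]%SET| = #|[set n | Q2 n]|.
Proof.
move=> H; rewrite card_cl; apply: eq_card => n; apply/idP/idP => /set_mem K; apply/mem_set.
  by move: K; rewrite /mkset H.
by move: K; rewrite /mkset H.
Qed.

Lemma Nd_le (dl : {set {set S}}) s : (Ndcnt yr dl s <= Ncnt yr s)%N.
Proof.
rewrite /Ndcnt /Ncnt -(card_cl _ (fun n => (yr n \in dl) && (s \in yr n))).
rewrite -(card_cl _ (fun n => s \in yr n)).
by apply: subset_leq_card; apply/fintype.subsetP => n; rewrite !finset.inE => /andP[].
Qed.

Lemma final (y : {set S}) (dl : {set {set S}}) (phiS : S -> nat -> R) (phiR : nat -> R) :
  0 < tau2 ->
  (forall s t, 0 <= sigma s t) ->
  (forall s t, s \in y -> t \in y ->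
     (Ncnt2 yr s t * Ndcnt yr dl s * Ndcnt yr dl t
      <= Ndcnt2 yr dl s t * Ncnt yr s * Ncnt yr t)%N) ->
  (forall psi : S -> nat -> R, (forall s, psi s 0%N = 0) ->
     (risk P theta y (seg_est yr theta eps mu y phiS)
      <= risk P theta y (seg_est yr theta eps mu y psi))%E) ->
  (risk P theta y (seg_est yr theta eps mu y phiS)
   <= risk P theta y (route_est yr theta eps mu y dl phiR))%E.
Proof.
move=> tau0 sig0 cond optS.
set M := Mcnt yr dl; set phi := phiR M.
pose c s := phi * (Ndcnt yr dl s)%:R / M%:R.
pose psi (s : S) (k : nat) := if k == 0%N then 0 else c s.
have psi0 : forall s, psi s 0%N = 0 by [].
have psiN : forall s, psi s (Ncnt yr s) = c s.
  move=> s; rewrite /psi; case: eqP => // N0.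
  have : (Ndcnt yr dl s <= 0)%N by rewrite -N0 Nd_le.
  by rewrite leqn0 => /eqP H; rewrite /c H mulr0 mul0r.
apply: le_trans (optS psi psi0) _.
rewrite /risk.
rewrite (_ : (fun w => _) = (fun w => (0 + \sum_s (if s \in y then psi s (Ncnt yr s) - 1 else 0) * vt s w
    + \sum_(k | k.2 \in yr k.1) (if k.2 \in y then
         psi k.2 (Ncnt yr k.2) / (Ncnt yr k.2)%:R else 0) * eps k.1 k.2 w) ^+ 2)); last first.
  by apply/funext => w; rewrite seg_form.
rewrite ML.
rewrite (_ : (fun w => _) = (fun w => (brt y dl phi M
  + \sum_s (phi * (Ndcnt yr dl s)%:R / M%:R - (s \in y)%:R) * vt s w
  + \sum_(k | k.2 \in yr k.1) (if yr k.1 \in dl then phi / M%:R else 0)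
      * eps k.1 k.2 w) ^+ 2)); last first.
  by apply/funext => w; rewrite route_form.
rewrite ML lee_fin.
apply: lerD; first apply: lerD.
- by rewrite expr0n /=; exact: sqr_ge0.
- apply: ler_wpM2l; first exact: ltW.
  apply: ler_sum => s _; case: (s \in y) => /=.
    by rewrite psiN /c.
  by rewrite expr0n /= sqr_ge0.
pose g s := if s \in y then psi s (Ncnt yr s) / (Ncnt yr s)%:R else 0.
pose h (n : 'I_N) := if yr n \in dl then phi / M%:R else 0.
rewrite (al_NR' yr _ (fun _ => 1) g sigma); last by move=> k; rewrite mul1r.
rewrite (al_NR' yr _ h (fun _ => 1) sigma); last by move=> k; rewrite mulr1.
apply: ler_sum => s _; apply: ler_sum => t _.
rewrite expr1n al_card_sum card_cl.
rewrite (eq_bigr (fun n => if yr n \in dl then (phi / M%:R) ^+ 2 else 0)); last first.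
  by move=> n _; rewrite /h; case: ifP; rewrite ?expr0n.
rewrite -big_mkcondr al_card_sum.
rewrite (card_cl2 _ _ (fun n => [&& yr n \in dl, s \in yr n & t \in yr n])); last first.
  by move=> n; case: (yr n \in dl); rewrite ?andbT ?andbF.
rewrite -/(Ncnt2 yr s t) -/(Ndcnt2 yr dl s t).
have R0 : 0 <= 1 * 1 * sigma s t * ((Ndcnt2 yr dl s t)%:R * (phi / M%:R) ^+ 2).
  by rewrite !mul1r; apply: mulr_ge0 => //; apply: mulr_ge0 => //; exact: sqr_ge0.
rewrite /g; case: (boolP (s \in y)) => sy; last by rewrite !mul0r.
case: (boolP (t \in y)) => ty; last by rewrite mulr0 !mul0r.
rewrite !psiN /c; apply: al_arith => //; exact: cond.
Qed.

End Main.

Theorem theorem2p5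
  (d : measure_display) (T : measurableType d) (R : realType)
  (P : probability T R)
  (S : finType) (N : nat) (yr : 'I_N -> {set S})
  (theta : S -> T -> R) (eps : 'I_N -> S -> T -> R)
  (mu tau2 : R) (sigma : S -> S -> R)
  (y : {set S}) (dl : {set {set S}})
  (phiS : S -> nat -> R) (phiR : nat -> R) :
  (* historical routes are nonempty sets of segments; y is a route *)
  (forall n, yr n != finset.set0) ->
  y != finset.set0 ->
  (* prior: theta_s i.i.d. with mean mu and variance tau2 > 0 *)
  0 < tau2 ->
  (forall s, theta s \in Lfun P 2%:E) ->
  (forall s, ('E_P[theta s] = mu%:E)%E) ->
  (forall s, ('V_P[theta s] = tau2%:E)%E) ->
  (forall s t, same_distribution P (theta s) (theta t)) ->
  mutually_independent P (fun s : S => gen_sigma [set s] theta) ->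
  (* errors: mean 0, covariances sigma_{s,t} within a trip *)
  (forall n s, s \in yr n -> eps n s \in Lfun P 2%:E) ->
  (forall n s, s \in yr n -> ('E_P[eps n s] = 0)%E) ->
  (forall n s t, s \in yr n -> t \in yr n ->
     covariance P (eps n s) (eps n t) = (sigma s t)%:E) ->
  (* errors from different trips are independent *)
  mutually_independent P
    (fun n : 'I_N => gen_sigma [set s | s \in yr n] (eps n)) ->
  (* theta independent of the errors *)
  independent2 P (gen_sigma setT theta)
    (gen_sigma [set ns : 'I_N * S | ns.2 \in yr ns.1]
               (fun ns => eps ns.1 ns.2)) ->
  (* nonnegative covariances *)
  (forall s t, 0 <= sigma s t) ->
  (* condition on the neighborhood *)
  (forall s t, s \in y -> t \in y ->
     (Ncnt2 yr s t * Ndcnt yr dl s * Ndcnt yr dl t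
      <= Ndcnt2 yr dl s t * Ncnt yr s * Ncnt yr t)%N) ->
  (* phiS gives the optimal segment-based estimator *)
  (forall s, phiS s 0%N = 0) ->
  (forall psi : S -> nat -> R, (forall s, psi s 0%N = 0) ->
     (risk P theta y (seg_est yr theta eps mu y phiS)
      <= risk P theta y (seg_est yr theta eps mu y psi))%E) ->
  (* phiR gives the optimal route-based estimator with neighborhood dl *)
  phiR 0%N = 0 ->
  (forall psi : nat -> R, psi 0%N = 0 ->
     (risk P theta y (route_est yr theta eps mu y dl phiR)
      <= risk P theta y (route_est yr theta eps mu y dl psi))%E) ->
  (risk P theta y (seg_est yr theta eps mu y phiS)
   <= risk P theta y (route_est yr theta eps mu y dl phiR))%E.
Proof.
move=> hne yne tau0 th2 thE thV sameD thI ep2 epE epC epI thep sig0 cond phiS0 optS phiR0 optR.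
exact: (final P yr theta eps mu tau2 sigma th2 thE thV thI ep2 epE epC epI thep y dl phiS phiR tau0 sig0 cond optS).
Qed.
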